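(* Let $S$ be a finite multiset of $m$ labeled points $(x,y)\in[0,1]\times\{-1,+1\}$ (a pool whose labels are hidden until queried), let $k\ge 0$ be an integer, and assume $\mathrm{err}(S,\mathcal{H}_{\dashv})\le k/m$. Consider the following procedure: query the labels of the points of $S$ in decreasing order of $x$ (from highest to lowest), stopping as soon as $k+1$ negative labels have been observed (or all points have been queried); then output a hypothesis $\hat h\in\mathcal{H}_{\dashv}$ that minimizes the error on the set of queried (now labeled) points. Then $\mathrm{err}(S,\hat h)=\mathrm{err}(S,\mathcal{H}_{\dashv})$, and the procedure queries at most $k+1$ points whose label is negative (auditing complexity $k+1$).
   Context: For $a\in[0,1]$, the threshold hypothesis $h_a:[0,1]\to\{-1,+1\}$ is $h_a(x)=+1$ if $x\ge a$ and $h_a(x)=-1$ otherwise; $\mathcal{H}_{\dashv}=\{h_a : a\in[0,1]\}$. For a multiset $S$ of labeled points, $\mathrm{err}(S,h)=\frac{1}{|S|}\sum_{(x,y)\in S}\mathbb{I}[h(x)\ne y]$ and $\mathrm{err}(S,\mathcal{H})=\min_{h\in\mathcal{H}}\mathrm{err}(S,h)$. The auditing complexity of a procedure is the number of queries it makes on points whose label is negative. *)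

(* Defs.v *)
From HB Require Import structures.
From mathcomp Require Import all_boot all_order all_algebra.
From mathcomp Require Import boolp classical_sets reals.
Set Implicit Arguments. Unset Strict Implicit. Unset Printing Implicit Defensive.
Import Order.TTheory GRing.Theory Num.Theory.
Local Open Scope ring_scope.
Local Open Scope classical_set_scope.

(* Labels: true = +1, false = -1.  A labeled point is (x, y) : R * bool.
   A finite multiset of labeled points is a seq (R * bool). *)

Definition thr (R : realType) (a : R) (x : R) : bool := a <= x.

Definition err (R : realType) (S : seq (R * bool)) (h : R -> bool) : R :=
  (count (fun p => h p.1 != p.2) S)%:R / (size S)%:R.

Definition errH (R : realType) (S : seq (R * bool)) : R :=
  inf [set err S (thr a) | a in [set a : R | 0 <= a <= 1]].

Fixpoint queried (R : realType) (k : nat) (s : seq (R * bool)) : seq (R * bool) :=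
  match s with
  | [::] => [::]
  | p :: s' =>
      if p.2 then p :: queried k s'
      else if k is k'.+1 then p :: queried k' s' else [:: p]
  end.

Definition nneg (R : realType) (s : seq (R * bool)) : nat := count (fun p => ~~ p.2) s.

(* Main.v *)
Require Import Defs.
From HB Require Import structures.
From mathcomp Require Import all_boot all_order all_algebra.
From mathcomp Require Import boolp classical_sets reals.
Import Order.TTheory GRing.Theory Num.Theory.
Local Open Scope ring_scope.

Section H.
Variable R : realType.
Implicit Types (S s Q Rs : seq (R * bool)) (p : R * bool).

Definition cnt S (b : R) := count (fun p => thr b p.1 != p.2) S.

Lemma err_ge0 S b : 0 <= err S (thr b).
Proof. by rewrite /err divr_ge0 // ler0n. Qed.

Lemma errH_le S b : 0 <= b <= 1 -> errH S <= err S (thr b).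
Proof.
move=> hb; have := @ge_inf R [set err S (thr a) | a in [set a : R | 0 <= a <= 1]].
move=> H; apply: H; last by exists b.
by exists 0 => _ [c _ <-]; apply: err_ge0.
Qed.

Lemma errH_ge S c : (forall b, 0 <= b <= 1 -> c <= err S (thr b)) -> c <= errH S.
Proof.
move=> H; apply: lb_le_inf.
  by exists (err S (thr 0)); exists 0 => //=; rewrite lexx ler01.
by move=> _ [b hb <-]; apply: H.
Qed.

Lemma queried_spec k s : queried k s = s \/
  exists Q p Rs, s = rcons Q p ++ Rs /\ queried k s = rcons Q p /\ p.2 = false
   /\ nneg Q = k.
Proof.
elim: s k => [|p s IH] k /=; first by left.
case: p => x y /=; case: y => /=.
  case: (IH k) => [->|[Q [q [Rs [e1 [e2 [e3 e4]]]]]]]; first by left.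
  right; exists ((x, true) :: Q), q, Rs; rewrite e2 e1 /=; split => //.
case: k => [|k].
  by right; exists [::], (x, false), s.
case: (IH k) => [->|[Q [q [Rs [e1 [e2 [e3 e4]]]]]]]; first by left.
right; exists ((x, false) :: Q), q, Rs; rewrite e2 e1 /=; split => //.
by split => //; split => //; rewrite /nneg /= -/(nneg Q) e4.
Qed.

Lemma nneg_queried k s : (nneg (queried k s) <= k.+1)%N.
Proof.
elim: s k => [|[x y] s IH] k //=; case: y => /=.
  by apply: IH.
case: k => [|k] //=; rewrite /nneg /= add1n ltnS; exact: IH.
Qed.

Lemma comb k s a :
  sorted (fun p q : R * bool => q.1 <= p.1) s ->
  (forall b, 0 <= b <= 1 -> (cnt (queried k s) a <= cnt (queried k s) b)%N) ->
  (exists2 b0, 0 <= b0 <= 1 & (cnt s b0 <= k)%N) ->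
  forall b, 0 <= b <= 1 -> (cnt s a <= cnt s b)%N.
Proof.
move=> Hs HQ [b0 hb0 Hb0].
case: (queried_spec k s) => [E|[Q [p [Rs [e1 [e2 [e3 e4]]]]]]].
  by rewrite -E; apply: HQ.
rewrite e2 in HQ.
have tr : transitive (fun p q : R * bool => q.1 <= p.1).
  by move=> y x z /= h1 h2; apply: le_trans h2 h1.
have Hs' : pairwise (fun p q : R * bool => q.1 <= p.1) (rcons Q p ++ Rs).
  by rewrite -e1 -(sorted_pairwise tr).
move: Hs'; rewrite pairwise_cat => /and3P[Hall HQp _].
move: Hall => /allrelP Hall.
set t := p.1.
have QR : forall q, q \in Rs -> q.1 <= t.
  by move=> q hq; apply: (Hall p q) => //; rewrite mem_rcons inE eqxx.
have QQ : forall q, q \in rcons Q p -> t <= q.1.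
  move=> q; rewrite mem_rcons inE => /orP[/eqP->//|hq].
  move: HQp; rewrite -cats1 pairwise_cat => /and3P[/allrelP H2 _ _].
  by apply: (H2 q p) => //; rewrite inE.
have nnegQ : nneg (rcons Q p) = k.+1.
  by rewrite /nneg -cats1 count_cat /= e3 /= -/(nneg Q) e4 addn1.
have low : forall b, b <= t -> (k.+1 <= cnt (rcons Q p) b)%N.
  move=> b hb; rewrite -nnegQ /nneg /cnt.
  rewrite (@eq_in_count _ _ (fun q => (~~ q.2) && (thr b q.1 != q.2))); last first.
    move=> q hq /=; have : thr b q.1 by rewrite /thr (le_trans hb) // QQ.
    by move=> ->; case: q {hq} => ? [].
  by apply: sub_count => q /andP[].
have high : forall b b', t < b -> t < b' -> cnt Rs b = cnt Rs b'.
  move=> b b' hb hb'; apply: eq_in_count => q hq /=.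
  have h1 : thr b q.1 = false by rewrite /thr; apply/negbTE; rewrite -ltNge (le_lt_trans (QR q hq)).
  have h2 : thr b' q.1 = false by rewrite /thr; apply/negbTE; rewrite -ltNge (le_lt_trans (QR q hq)).
  by rewrite h1 h2.
have cs : forall b, cnt s b = (cnt (rcons Q p) b + cnt Rs b)%N.
  by move=> b; rewrite e1 /cnt count_cat.
have tb0 : t < b0.
  rewrite ltNge; apply/negP => h; have := low _ h.
  by rewrite cs in Hb0 => h'; move: (leq_trans h' (leq_trans (leq_addr _ _) Hb0)); rewrite ltnn.
have ta : t < a.
  rewrite ltNge; apply/negP => h; have := low _ h => h'.
  have := leq_trans h' (HQ _ hb0); rewrite cs in Hb0.
  by move=> h2; move: (leq_trans h2 (leq_trans (leq_addr _ _) Hb0)); rewrite ltnn.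
move=> b hb; case: (leP b t) => hbt.
  have := low _ hbt => h1.
  have h2 : (cnt s a <= k)%N.
    apply: leq_trans Hb0; rewrite !cs (high a b0) // leq_add2r; exact: HQ.
  rewrite (cs b); apply: leq_trans (leq_addr _ _).
  exact: leq_trans (leqW h2) h1.
by rewrite !cs (high a b) // leq_add2r; apply: HQ.
Qed.

End H.
Arguments cnt {R}.
Arguments errH_le {R}.
Arguments errH_ge {R}.

Theorem lemma2 (R : realType) (S : seq (R * bool)) (k : nat)
  (HS01 : forall p, p \in S -> 0 <= p.1 <= 1)
  (Herr : errH S <= k%:R / (size S)%:R)
  (s : seq (R * bool))
  (Hperm : perm_eq s S)
  (Hsorted : sorted (fun p q : R * bool => q.1 <= p.1) s)
  (a : R) (Ha01 : 0 <= a <= 1)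
  (Hmin : err (queried k s) (thr a) = errH (queried k s)) :
  err S (thr a) = errH S /\ (nneg (queried k s) <= k.+1)%N.
Proof.
split; last exact: nneg_queried.
have errE : forall (T : seq (R * bool)) (b : R), err T (thr b) = (cnt T b)%:R / (size T)%:R by [].
have cntP : forall b, cnt S b = cnt s b by move=> b; rewrite /cnt (permP Hperm).
case: (posnP (size S)) => [/size0nil ->|mpos].
  apply/eqP; rewrite eq_le; apply/andP; split; last exact: errH_le.
  by apply: errH_ge => b _; rewrite /err /= invr0 !mulr0.
have mpos' : 0 < (size S)%:R :> R by rewrite ltr0n.
have key : forall b, 0 <= b <= 1 -> (cnt s a <= cnt s b)%N.
  apply: (@comb _ k) => //.
  - move=> b hb.
    case: (posnP (size (queried k s))) => [/size0nil E|qpos]; first by rewrite E.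
    have qpos' : 0 < (size (queried k s))%:R :> R by rewrite ltr0n.
    have := errH_le (queried k s) b hb; rewrite -Hmin !errE.
    by rewrite ler_pM2r ?invr_gt0 // ler_nat.
  - apply/exists2P; apply: contraPP Herr => /forallNP H.
    apply/negP; rewrite -ltNge; apply: (@lt_le_trans _ _ ((k.+1)%:R / (size S)%:R)).
      by rewrite ltr_pM2r ?invr_gt0 // ltr_nat.
    apply: errH_ge => b hb; rewrite errE ler_pM2r ?invr_gt0 // ler_nat cntP.
    by rewrite ltnNge; apply/negP => h; apply: (H b); split.
apply/eqP; rewrite eq_le; apply/andP; split; last exact: errH_le.
by apply: errH_ge => b hb; rewrite !errE ler_pM2r ?invr_gt0 // ler_nat !cntP key.
Qed.
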